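(* Let $\mathscr P_1,\mathscr P_2$ be non-empty collections of $L^0$-seminorms on a stable $L^0$-module $E$. If $\mathscr T_0(\mathscr P_1)=\mathscr T_0(\mathscr P_2)$, then $\mathscr T_{\epsilon,\lambda}(\mathscr P_1)=\mathscr T_{\epsilon,\lambda}(\mathscr P_2)$.
   Context: $(\Omega,\mathcal F,\mathbb P)$ is a probability space, $L^0$ the real-valued measurable functions modulo a.e. equality (ordered a.e.), $L^0_+=\{r\ge0\}$, $L^0_{++}=\{r\in L^0:r>0\text{ a.e.}\}$. An $L^0$-module $E$ is stable if for every countable measurable partition $(A_k)$ of $\Omega$ and $(x_k)\subset E$ there is a unique $x\in E$ with $1_{A_k}x=1_{A_k}x_k$ for all $k$. An $L^0$-seminorm is a map $p:E\to L^0_+$ with $p(rx)=|r|p(x)$ and $p(x+y)\le p(x)+p(y)$. For a collection $\mathscr P$ of $L^0$-seminorms: $\mathscr T_0(\mathscr P)$ (locally $L^0$-convex topology) is generated by the base of sets $U_{x,N,r}=\{y\in E:\sup_{p\in N}p(x-y)<r\}$ with $x\in E$, $N\subset\mathscr P$ finite, $r\in L^0_{++}$; $\mathscr T_{\epsilon,\lambda}(\mathscr P)$ (the $(\epsilon,\lambda)$-topology) is generated by the base of sets $U_{x,N,\epsilon,\lambda}=\{y\in E:\mathbb P(\sup_{p\in N}p(x-y)<\epsilon)>1-\lambda\}$ with $x\in E$, $N\subset\mathscr P$ finite, real $\epsilon>0$, $0<\lambda<1$. *)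

(* Defs.v *)
From Stdlib Require Import Reals List ClassicalEpsilon.
Open Scope R_scope.

Record ProbSpace := {
  Omega : Type;
  Fsig : (Omega -> Prop) -> Prop;
  Fsig_full : Fsig (fun _ => True);
  Fsig_compl : forall A, Fsig A -> Fsig (fun w => ~ A w);
  Fsig_cunion : forall A : nat -> Omega -> Prop,
      (forall n, Fsig (A n)) -> Fsig (fun w => exists n, A n w);
  Prob : (Omega -> Prop) -> R;
  Prob_nonneg : forall A, Fsig A -> 0 <= Prob A;
  Prob_full : Prob (fun _ => True) = 1;
  Prob_sigma : forall A : nat -> Omega -> Prop,
      (forall n, Fsig (A n)) ->
      (forall m n w, m <> n -> A m w -> A n w -> False) ->
      infinite_sum (fun n => Prob (A n)) (Prob (fun w => exists n, A n w))
}.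

Section L0.
Variable ps : ProbSpace.
Local Notation Om := (Omega ps).

(** real-valued measurable functions = representatives of elements of L^0 *)
Definition meas (f : Om -> R) : Prop := forall a : R, Fsig ps (fun w => f w < a).

Definition ae (Q : Om -> Prop) : Prop :=
  exists N, Fsig ps N /\ Prob ps N = 0 /\ forall w, ~ N w -> Q w.

Definition L0pp (r : Om -> R) : Prop := meas r /\ ae (fun w => 0 < r w).

Definition ind (A : Om -> Prop) : Om -> R :=
  fun w => if excluded_middle_informative (A w) then 1 else 0.

End L0.

(** The carrier is the (already quotiented) module E with
    Leibniz equality; scalars are measurable representatives, and a.e.-equal
    scalars act identically, so this is exactly a module over L^0. *)
Record L0Module (ps : ProbSpace) := {
  Ecar :> Type;
  ezero : Ecar;
  eadd : Ecar -> Ecar -> Ecar;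
  eopp : Ecar -> Ecar;
  esmul : (Omega ps -> R) -> Ecar -> Ecar;
  eaddA : forall x y z, eadd x (eadd y z) = eadd (eadd x y) z;
  eaddC : forall x y, eadd x y = eadd y x;
  eadd0 : forall x, eadd x ezero = x;
  eaddN : forall x, eadd x (eopp x) = ezero;
  esmul_ae : forall r s x, meas ps r -> meas ps s ->
      ae ps (fun w => r w = s w) -> esmul r x = esmul s x;
  esmulDr : forall r x y, meas ps r -> esmul r (eadd x y) = eadd (esmul r x) (esmul r y);
  esmulDl : forall r s x, meas ps r -> meas ps s ->
      esmul (fun w => r w + s w) x = eadd (esmul r x) (esmul s x);
  esmulA : forall r s x, meas ps r -> meas ps s ->
      esmul (fun w => r w * s w) x = esmul r (esmul s x);
  esmul1 : forall x, esmul (fun _ => 1) x = x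
}.

Arguments ezero {ps} _.
Arguments eadd {ps l}.
Arguments eopp {ps l}.
Arguments esmul {ps l}.

Section Topologies.
Variable ps : ProbSpace.
Variable M : L0Module ps.
Local Notation Om := (Omega ps).

Definition esub (x y : M) : M := eadd x (eopp y).

Definition stable : Prop :=
  forall (A : nat -> Om -> Prop) (xs : nat -> M),
    (forall k, Fsig ps (A k)) ->
    (forall m n w, m <> n -> A m w -> A n w -> False) ->
    (forall w, exists k, A k w) ->
    exists! x : M, forall k, esmul (ind ps (A k)) x = esmul (ind ps (A k)) (xs k).

Definition L0seminorm (p : M -> Om -> R) : Prop :=
  (forall x, meas ps (p x)) /\
  (forall x, ae ps (fun w => 0 <= p x w)) /\
  (forall r x, meas ps r -> ae ps (fun w => p (esmul r x) w = Rabs (r w) * p x w)) /\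
  (forall x y, ae ps (fun w => p (eadd x y) w <= p x w + p y w)).

Definition seminorm_family (PP : (M -> Om -> R) -> Prop) : Prop :=
  forall p, PP p -> L0seminorm p.

(** finite subsets N of PP are given by lists; sup_{p in N} p(z), pointwise *)
Definition supN (N : list (M -> Om -> R)) (z : M) : Om -> R :=
  fun w => fold_right (fun p acc => Rmax (p z w) acc) 0 N.

Definition finsub (PP : (M -> Om -> R) -> Prop) (N : list (M -> Om -> R)) : Prop :=
  forall p, In p N -> PP p.

Definition U0 (x : M) (N : list (M -> Om -> R)) (r : Om -> R) : M -> Prop :=
  fun y => ae ps (fun w => supN N (esub x y) w < r w).

Definition Uel (x : M) (N : list (M -> Om -> R)) (eps lam : R) : M -> Prop :=
  fun y => Prob ps (fun w => supN N (esub x y) w < eps) > 1 - lam.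

Definition T0_base (PP : (M -> Om -> R) -> Prop) (B : M -> Prop) : Prop :=
  exists x N r, finsub PP N /\ L0pp ps r /\ forall y, B y <-> U0 x N r y.

Definition Tel_base (PP : (M -> Om -> R) -> Prop) (B : M -> Prop) : Prop :=
  exists x N eps lam, finsub PP N /\ 0 < eps /\ 0 < lam < 1 /\
    forall y, B y <-> Uel x N eps lam y.

Definition gen_open (base : (M -> Prop) -> Prop) (O : M -> Prop) : Prop :=
  forall y, O y -> exists B, base B /\ B y /\ forall z, B z -> O z.

Definition T0_open (PP : (M -> Om -> R) -> Prop) := gen_open (T0_base PP).
Definition Tel_open (PP : (M -> Om -> R) -> Prop) := gen_open (Tel_base PP).

End Topologies.

Arguments stable {ps} M.
Arguments seminorm_family {ps} M PP.
Arguments T0_open {ps} M PP O.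
Arguments Tel_open {ps} M PP O.

(* Main.v *)
Require Import Defs.
From Stdlib Require Import Reals List ClassicalEpsilon Lra Lia FunctionalExtensionality PropExtensionality Classical ZArith.
Open Scope R_scope.

Section Meas.
Variable ps : ProbSpace.
Local Notation Om := (Omega ps).
Local Notation F := (Fsig ps).
Local Notation P := (Prob ps).

Lemma set_ext (A B : Om -> Prop) : (forall w, A w <-> B w) -> A = B.
Proof. intros H; apply functional_extensionality; intro w; apply propositional_extensionality; auto. Qed.

Lemma F_ext (A B : Om -> Prop) : F A -> (forall w, A w <-> B w) -> F B.
Proof. intros HA H; rewrite <- (set_ext A B H); exact HA. Qed.

Lemma P_ext (A B : Om -> Prop) : (forall w, A w <-> B w) -> P A = P B.
Proof. intros H; rewrite (set_ext A B H); reflexivity. Qed.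

Lemma F_compl (A : Om -> Prop) : F A -> F (fun w => ~ A w).
Proof. apply Fsig_compl. Qed.

Lemma F_empty : F (fun _ => False).
Proof. apply F_ext with (fun w => ~ True). apply F_compl, Fsig_full. tauto. Qed.

Lemma F_union (A B : Om -> Prop) : F A -> F B -> F (fun w => A w \/ B w).
Proof. intros HA HB.
  apply F_ext with (fun w => exists n, (match n with 0%nat => A | _ => B end) w).
  - apply Fsig_cunion. intros [|n]; auto.
  - intro w; split. intros [[|n] H]; auto. intros [H|H]. exists 0%nat; auto. exists 1%nat; auto.
Qed.

Lemma F_inter (A B : Om -> Prop) : F A -> F B -> F (fun w => A w /\ B w).
Proof. intros HA HB. apply F_ext with (fun w => ~ (~ A w \/ ~ B w)).
  apply F_compl, F_union; apply F_compl; auto.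
  intro w; split. intro H; destruct (classic (A w)), (classic (B w)); tauto. tauto.
Qed.

Lemma F_prop (Q : Prop) : F (fun _ => Q).
Proof. destruct (classic Q) as [H|H].
  apply F_ext with (fun _ => True). apply Fsig_full. tauto.
  apply F_ext with (fun _ => False). apply F_empty. tauto. Qed.

Lemma meas_const c : meas ps (fun _ => c).
Proof. intro a. apply F_prop. Qed.

Lemma F_ge f a : meas ps f -> F (fun w => a <= f w).
Proof. intros Hf. apply F_ext with (fun w => ~ f w < a). apply F_compl, Hf.
  intro w; split; intro; lra. Qed.

Lemma arch_inv d : 0 < d -> exists n : nat, / (INR n + 1) < d.
Proof. intros Hd. destruct (archimed (/ d)) as [H1 _].
  assert (Hu : (0 <= up (/d))%Z).
  { apply le_IZR. assert (0 < /d) by (apply Rinv_0_lt_compat; lra). lra. }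
  exists (Z.to_nat (up (/ d))).
  rewrite INR_IZR_INZ, Z2Nat.id by exact Hu.
  assert (0 < /d) by (apply Rinv_0_lt_compat; lra).
  replace d with (/ / d) at 2 by (field; lra).
  apply Rinv_lt_contravar; nra.
Qed.

Lemma F_lt_fun f g c : meas ps f -> meas ps g -> F (fun w => f w + c < g w).
Proof. intros Hf Hg.
  set (q1 := fun n m : nat => INR m / (INR n + 1)).
  set (q2 := fun n m : nat => - INR m / (INR n + 1)).
  apply F_ext with (fun w => exists n m : nat,
     (f w < q1 n m - c /\ q1 n m <= g w) \/ (f w < q2 n m - c /\ q2 n m <= g w)).
  - apply Fsig_cunion; intro n. apply Fsig_cunion; intro m.
    apply F_union; apply F_inter; try apply Hf; apply F_ge; auto.
  - intro w; split.
    + intros [n [m [[H1 H2]|[H1 H2]]]]; lra.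
    + intro H. destruct (arch_inv (g w - f w - c)) as [n Hn]; [lra|].
      set (N := INR n + 1). assert (HN : 0 < N) by (unfold N; pose proof (pos_INR n); lra).
      destruct (archimed ((f w + c) * N)) as [K1 K2].
      set (k := up ((f w + c) * N)) in *.
      assert (Hq : f w + c < IZR k / N /\ IZR k / N <= g w).
      { assert (HiN: N * / N = 1) by (field; lra).
        assert (0 < / N) by (apply Rinv_0_lt_compat; lra).
        unfold Rdiv; fold N in Hn.
        assert (E1 : IZR k * / N = (f w + c) + (IZR k - (f w + c) * N) * / N) by (field; lra).
        rewrite E1. split.
        - assert (0 < (IZR k - (f w + c) * N) * / N) by (apply Rmult_lt_0_compat; lra). lra.
        - assert ((IZR k - (f w + c) * N) * / N <= 1 * / N) by (apply Rmult_le_compat_r; lra). lra. }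
      exists n. destruct (Z_le_gt_dec 0 k) as [Hk|Hk].
      * exists (Z.to_nat k). left. unfold q1. rewrite INR_IZR_INZ, Z2Nat.id by exact Hk. fold N. lra.
      * exists (Z.to_nat (- k)). right. unfold q2. rewrite INR_IZR_INZ, Z2Nat.id by lia.
        rewrite opp_IZR, Ropp_involutive. fold N. lra.
Qed.

Lemma meas_max f g : meas ps f -> meas ps g -> meas ps (fun w => Rmax (f w) (g w)).
Proof. intros Hf Hg a. apply F_ext with (fun w => f w < a /\ g w < a).
  apply F_inter; auto. intro w; split. intros [H1 H2]; apply Rmax_lub_lt; auto.
  intro H; split; eapply Rle_lt_trans; [apply Rmax_l| |apply Rmax_r|]; eauto. Qed.

Lemma meas_ind A : F A -> meas ps (Defs.ind ps A).
Proof. intros HA a. apply F_ext with (fun w => (A w /\ 1 < a) \/ (~ A w /\ 0 < a)).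
  apply F_union; apply F_inter; auto using F_prop, F_compl.
  intro w; unfold Defs.ind; destruct excluded_middle_informative; split; intuition. Qed.

Lemma sum_const c n : sum_f_R0 (fun _ => c) n = INR (S n) * c.
Proof. induction n. simpl; lra. simpl sum_f_R0. rewrite IHn. rewrite (S_INR (S n)). lra. Qed.

Lemma P_empty : P (fun _ => False) = 0.
Proof. pose proof (Prob_sigma ps (fun _ _ => False) (fun _ => F_empty) ltac:(tauto)) as H.
  cbv beta in H. rewrite (P_ext (fun w => exists n : nat, False) (fun _ => False)) in H
    by (intro w; split; [intros [_ []] | tauto]).
  set (c := P (fun _ => False)) in *.
  destruct (Req_dec c 0) as [E|E]; auto. exfalso.
  assert (Hc : 0 < Rabs c / 2) by (pose proof (Rabs_pos_lt c E); lra).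
  destruct (H _ Hc) as [N HN].
  pose proof (HN N (le_n _)) as A1. pose proof (HN (S N) (le_S _ _ (le_n _))) as A2.
  unfold R_dist in *. rewrite sum_const in A1, A2. rewrite (S_INR (S N)) in A2.
  set (u := INR (S N) * c - c) in *.
  replace (((INR (S N) + 1) * c - c)) with (u + c) in A2 by (unfold u; ring).
  pose proof (Rabs_triang (u + c) (- u)). rewrite Rabs_Ropp in H0.
  replace (u + c + - u) with c in H0 by ring. lra.
Qed.

Lemma P_add2 A B : F A -> F B -> (forall w, A w -> B w -> False) ->
  P (fun w => A w \/ B w) = P A + P B.
Proof. intros HA HB Hd.
  set (s := fun n : nat => match n with 0%nat => A | 1%nat => B | _ => fun _ : Om => False end).
  assert (Hs : forall n, F (s n)) by (intros [|[|n]]; simpl; auto using F_empty).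
  assert (Hsd : forall m n w, m <> n -> s m w -> s n w -> False).
  { intros [|[|m]] [|[|n]] w Hmn; simpl; try tauto; try (exfalso; lia); eauto. }
  pose proof (Prob_sigma ps s Hs Hsd) as H.
  rewrite (P_ext _ (fun w => A w \/ B w)) in H.
  2:{ intro w; split. intros [[|[|n]] Hn]; simpl in Hn; tauto.
      intros [H1|H1]; [exists 0%nat|exists 1%nat]; auto. }
  apply (uniqueness_sum _ _ _ H).
  intros eps Heps. exists 1%nat. intros n Hn. unfold R_dist.
  assert (E : forall k, sum_f_R0 (fun n => P (s n)) (S k) = P A + P B).
  { induction k. simpl. ring. simpl sum_f_R0 in *. rewrite IHk. simpl. rewrite P_empty. ring. }
  destruct n. lia. rewrite E. replace (P A + P B - (P A + P B)) with 0 by ring.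
  rewrite Rabs_R0; lra.
Qed.

Lemma P_mono A B : F A -> F B -> (forall w, A w -> B w) -> P A <= P B.
Proof. intros HA HB H.
  rewrite (P_ext B (fun w => A w \/ (B w /\ ~ A w))).
  rewrite P_add2; auto. pose proof (Prob_nonneg ps _ (F_inter _ _ HB (F_compl _ HA))). lra.
  apply F_inter; auto using F_compl. tauto.
  intro w; split. intro; destruct (classic (A w)); tauto. intros [?|[? ?]]; auto.
Qed.

Lemma P_compl A : F A -> P (fun w => ~ A w) = 1 - P A.
Proof. intros HA. rewrite <- (Prob_full ps).
  rewrite (P_ext (fun _ => True) (fun w => A w \/ ~ A w)) by (intro w; split; [intros; apply classic|tauto]).
  rewrite P_add2; auto using F_compl. ring. Qed.

Lemma P_union_le A B : F A -> F B -> P (fun w => A w \/ B w) <= P A + P B.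
Proof. intros HA HB.
  rewrite (P_ext _ (fun w => A w \/ (B w /\ ~ A w))).
  rewrite P_add2; auto using F_inter, F_compl.
  pose proof (P_mono (fun w => B w /\ ~ A w) B ltac:(auto using F_inter, F_compl) HB ltac:(intros w [? ?]; auto)). lra.
  tauto. intro w; split. intro; destruct (classic (A w)); tauto. tauto.
Qed.

Lemma P_inter_ge A B : F A -> F B -> P A + P B - 1 <= P (fun w => A w /\ B w).
Proof. intros HA HB.
  rewrite (P_ext A (fun w => (A w /\ B w) \/ (A w /\ ~ B w))) at 1.
  rewrite P_add2; auto using F_inter, F_compl.
  pose proof (P_mono (fun w => A w /\ ~ B w) (fun w => ~ B w) ltac:(auto using F_inter, F_compl) ltac:(auto using F_compl) ltac:(intros w [? ?]; auto)).
  rewrite P_compl in H; auto. lra. tauto.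
  intro w; split. intro; destruct (classic (B w)); tauto. tauto.
Qed.

Lemma P_ae_le S T : F S -> F T -> ae ps (fun w => S w -> T w) -> P S <= P T.
Proof. intros HS HT [N [HN [HN0 H]]].
  apply Rle_trans with (P (fun w => T w \/ N w)).
  apply P_mono; auto using F_union. intros w Hw. destruct (classic (N w)); auto.
  pose proof (P_union_le T N HT HN). lra. Qed.

Lemma ae_mono (Q R : Om -> Prop) : ae ps Q -> (forall w, Q w -> R w) -> ae ps R.
Proof. intros [N [H1 [H2 H3]]] H. exists N; auto. Qed.

Lemma ae_and (Q R : Om -> Prop) : ae ps Q -> ae ps R -> ae ps (fun w => Q w /\ R w).
Proof. intros [N1 [H1 [H2 H3]]] [N2 [G1 [G2 G3]]]. exists (fun w => N1 w \/ N2 w).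
  split. auto using F_union. split.
  pose proof (P_union_le N1 N2 H1 G1). pose proof (Prob_nonneg ps _ (F_union _ _ H1 G1)). lra.
  intros w Hw; split; auto. Qed.

Lemma ae_true : ae ps (fun _ => True).
Proof. exists (fun _ => False). split. apply F_empty. split. apply P_empty. auto. Qed.

Lemma P_ae_one S : F S -> ae ps S -> 1 <= P S.
Proof. intros HS H. rewrite <- (Prob_full ps). apply P_ae_le; auto using Fsig_full.
  eapply ae_mono; eauto. Qed.

Lemma P_cont (G : nat -> Om -> Prop) c : (forall n, F (G n)) ->
  (forall n w, G n w -> G (S n) w) -> P (fun w => exists n, G n w) > c ->
  exists n, P (G n) > c.
Proof. intros HG Hinc Hc.
  assert (Hmono : forall m n w, (m <= n)%nat -> G m w -> G n w).
  { intros m n w Hmn. induction Hmn; auto. }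
  set (D := fun n => match n with 0%nat => G 0%nat | S k => fun w => G (S k) w /\ ~ G k w end).
  assert (HD : forall n, F (D n)) by (intros [|n]; simpl; auto using F_inter, F_compl).
  assert (HDG : forall n w, D n w -> G n w) by (intros [|n] w; simpl; tauto).
  assert (Hsum : forall n, sum_f_R0 (fun k => P (D k)) n = P (G n)).
  { induction n. reflexivity. simpl sum_f_R0. rewrite IHn.
    rewrite (P_ext (G (S n)) (fun w => G n w \/ D (S n) w)).
    rewrite P_add2; auto. simpl; tauto.
    intro w; simpl; split. intro; destruct (classic (G n w)); tauto. intros [?|[? ?]]; auto. }
  assert (Hdis : forall m n w, m <> n -> D m w -> D n w -> False).
  { assert (K : forall m n w, (m < n)%nat -> D m w -> D n w -> False).
    { intros m [|n] w Hmn Hm Hn. lia. simpl in Hn. destruct Hn as [_ Hn]. apply Hn.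
      apply (Hmono m); [lia|auto]. }
    intros m n w Hmn. destruct (Nat.lt_gt_cases m n) as [[?|?] _]; auto.
    intros; eapply K; eauto. intros; eapply K; eauto. }
  pose proof (Prob_sigma ps D HD Hdis) as H.
  rewrite (P_ext _ (fun w => exists n, G n w)) in H.
  2:{ intro w; split. intros [n Hn]; eauto.
      intros [n Hn]. induction n. exists 0%nat; auto.
      destruct (classic (G n w)); auto. exists (S n); simpl; auto. }
  destruct (H (P (fun w => exists n, G n w) - c)) as [N HN]. lra.
  exists N. specialize (HN N (le_n _)). unfold R_dist in HN. rewrite Hsum in HN.
  apply Rabs_def2 in HN. lra.
Qed.

End Meas.

Section Mod.
Variable ps : ProbSpace.
Variable M : L0Module ps.
Local Notation Om := (Omega ps).
Local Notation F := (Fsig ps).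
Local Notation P := (Prob ps).
Local Notation sN := (supN ps M).
Local Notation e0 := (ezero M).

Lemma add0l (x : M) : eadd e0 x = x.
Proof. rewrite eaddC; apply eadd0. Qed.

Lemma opp_unique (a b : M) : eadd a b = e0 -> b = eopp a.
Proof. intros H. rewrite <- (eadd0 ps M b), <- (eaddN ps M a), eaddA, (eaddC ps M b a), H.
  apply add0l. Qed.

Lemma esub_self (x : M) : esub ps M x x = e0.
Proof. apply eaddN. Qed.

Lemma esub_split (x y z : M) : esub ps M x z = eadd (esub ps M x y) (esub ps M y z).
Proof. unfold esub. rewrite <- eaddA, (eaddA ps M (eopp y) y), (eaddC ps M (eopp y) y), eaddN, add0l.
  reflexivity. Qed.

Lemma esub_back (y w : M) : esub ps M y (eadd y (eopp w)) = w.
Proof. unfold esub.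
  assert (H : eopp (eadd y (eopp w)) = eadd (eopp y) w).
  { symmetry; apply opp_unique.
    rewrite <- eaddA, (eaddC ps M (eopp w) (eadd (eopp y) w)), <- (eaddA ps M (eopp y) w), eaddN, eadd0, eaddN.
    reflexivity. }
  rewrite H, eaddA, eaddN, add0l. reflexivity. Qed.

Lemma esmul0 (x : M) : esmul (fun _ => 0) x = e0.
Proof.
  pose proof (esmulDl ps M (fun _ => 0) (fun _ => 0) x (meas_const ps 0) (meas_const ps 0)) as H.
  cbv beta in H.
  replace (fun _ : Om => 0 + 0) with (fun _ : Om => 0) in H
    by (apply functional_extensionality; intro; ring).
  set (a := esmul (fun _ => 0) x) in *.
  assert (H2 : eadd a (eopp a) = eadd (eadd a a) (eopp a)) by (rewrite <- H; reflexivity).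
  rewrite <- eaddA, eaddN, eadd0 in H2. auto. Qed.

Lemma p_zero p : L0seminorm ps M p -> ae ps (fun w => p e0 w = 0).
Proof. intros [Hm [Hn [Hh Ht]]].
  eapply ae_mono. apply (Hh (fun _ => 0) e0 (meas_const ps 0)).
  intros w Hw. rewrite esmul0 in Hw. rewrite Hw, Rabs_R0; ring. Qed.

Lemma sN_nonneg N z w : 0 <= sN N z w.
Proof. induction N; simpl; unfold supN in *; simpl. lra.
  eapply Rle_trans; [exact IHN| apply Rmax_r]. Qed.

Lemma sN_ge N z w p : In p N -> p z w <= sN N z w.
Proof. induction N; simpl; unfold supN in *; simpl. tauto.
  intros [<-|H]. apply Rmax_l. eapply Rle_trans; [apply IHN; auto| apply Rmax_r]. Qed.

Lemma sN_le N z w c : (forall p, In p N -> p z w <= c) -> 0 <= c -> sN N z w <= c.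
Proof. induction N; simpl; unfold supN in *; simpl; intros H Hc. auto.
  apply Rmax_lub; auto. Qed.

Lemma sN_ext N a b w : (forall p, In p N -> p a w = p b w) -> sN N a w = sN N b w.
Proof. induction N; simpl; unfold supN in *; simpl; intros H. auto.
  rewrite H, IHN; auto. Qed.

Lemma meas_sN N z : (forall p, In p N -> L0seminorm ps M p) -> meas ps (sN N z).
Proof. induction N; intros H. apply meas_const.
  change (meas ps (fun w => Rmax (a z w) (sN N z w))).
  apply meas_max. apply (H a (or_introl eq_refl)). apply IHN; simpl in H; auto. Qed.

Lemma ae_list (Q : (M -> Om -> R) -> Om -> Prop) (N : list (M -> Om -> R)) :
  (forall p, In p N -> ae ps (Q p)) -> ae ps (fun w => forall p, In p N -> Q p w).
Proof. induction N; intros H. eapply ae_mono. apply ae_true. simpl; tauto.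
  eapply ae_mono. apply ae_and. apply (H a (or_introl eq_refl)). apply IHN; simpl in H; auto.
  intros w [H1 H2] p [<-|Hp]; auto. Qed.

Lemma sN_zero N : (forall p, In p N -> L0seminorm ps M p) -> ae ps (fun w => sN N e0 w = 0).
Proof. intros H. eapply ae_mono. apply ae_list with (N := N) (Q := fun p w => p e0 w = 0).
  intros; apply p_zero; auto.
  intros w Hw. apply Rle_antisym. apply sN_le. intros p Hp; rewrite Hw; auto; lra. lra.
  apply sN_nonneg. Qed.

Lemma sN_tri N a b : (forall p, In p N -> L0seminorm ps M p) ->
  ae ps (fun w => sN N (eadd a b) w <= sN N a w + sN N b w).
Proof. intros H. eapply ae_mono. apply ae_list with (N := N) (Q := fun p w => p (eadd a b) w <= p a w + p b w).
  intros p Hp; apply (H p Hp).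
  intros w Hw. apply sN_le. intros p Hp. pose proof (sN_ge N a w p Hp). pose proof (sN_ge N b w p Hp).
  specialize (Hw p Hp). lra. pose proof (sN_nonneg N a w). pose proof (sN_nonneg N b w). lra. Qed.

Lemma sN_ind N A u : (forall p, In p N -> L0seminorm ps M p) -> F A ->
  ae ps (fun w => (A w -> sN N (esmul (Defs.ind ps A) u) w = sN N u w) /\
                  (~ A w -> sN N (esmul (Defs.ind ps A) u) w = 0)).
Proof. intros H HA. eapply ae_mono.
  apply ae_list with (N := N) (Q := fun p w => p (esmul (Defs.ind ps A) u) w = Rabs (Defs.ind ps A w) * p u w).
  intros p Hp. apply (H p Hp). apply meas_ind; auto.
  intros w Hw. unfold Defs.ind in Hw. destruct (excluded_middle_informative (A w)) as [Ha|Ha]; split; try tauto.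
  - intros _. apply sN_ext. intros p Hp; rewrite Hw; auto. rewrite Rabs_R1; ring.
  - intros _. apply Rle_antisym. apply sN_le. intros p Hp; rewrite Hw; auto. rewrite Rabs_R0; lra. lra.
    apply sN_nonneg. Qed.

End Mod.

Section Main.
Variable ps : ProbSpace.
Variable M : L0Module ps.
Local Notation Om := (Omega ps).
Local Notation F := (Fsig ps).
Local Notation P := (Prob ps).
Local Notation sN := (supN ps M).

Lemma half (P1 P2 : (M -> Om -> R) -> Prop) :
  seminorm_family M P1 -> seminorm_family M P2 ->
  (forall O, T0_open M P1 O -> T0_open M P2 O) ->
  forall B y, Tel_base ps M P1 B -> B y ->
  exists B', Tel_base ps M P2 B' /\ B' y /\ forall z, B' z -> B z.
Proof.
  intros HP1 HP2 HT B y [x [N1 [eps [lam [HfN1 [Heps [Hlam HB]]]]]]] Hy.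
  assert (HN1 : forall p, In p N1 -> L0seminorm ps M p) by (intros p Hp; apply HP1, HfN1, Hp).
  apply HB in Hy. unfold Uel in Hy.
  set (g := sN N1 (esub ps M x y)) in *.
  assert (Hg : meas ps g) by (apply meas_sN; auto).
  set (r := fun w => if Rlt_dec (g w) eps then eps - g w else 1).
  assert (Hr : forall w, 0 < r w) by (intro w; unfold r; destruct Rlt_dec; lra).
  assert (Hrm : meas ps r).
  { intro a. apply F_ext with (fun w => (g w < eps /\ (fun _ => 0) w + (eps - a) < g w) \/ (~ g w < eps /\ 1 < a)).
    apply F_union; apply F_inter; auto using F_compl, F_prop, F_lt_fun, meas_const.
    intro w; unfold r; destruct Rlt_dec; split; intros; try lra; intuition lra. }
  set (O := fun u => exists B0, T0_base ps M P1 B0 /\ B0 u /\ forall v, B0 v -> U0 ps M y N1 r v).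
  assert (HO : T0_open M P1 O).
  { intros u [B0 [H1 [H2 H3]]]. exists B0; split; auto; split; auto. intros z Hz; exists B0; auto. }
  assert (HOy : O y).
  { exists (U0 ps M y N1 r). split.
    - exists y, N1, r. split; auto. split. split; auto. eapply ae_mono; [apply ae_true|auto].
      tauto.
    - split; auto. unfold U0. rewrite (esub_self ps M y). eapply ae_mono. apply (sN_zero ps M N1 HN1).
      intros w Hw; cbv beta in Hw; rewrite Hw; auto. }
  destruct (HT O HO y HOy) as [B2 [[c2 [N2 [r2 [HfN2 [[Hr2m Hr2p] HB2]]]]] [HB2y HB2s]]].
  assert (HN2 : forall p, In p N2 -> L0seminorm ps M p) by (intros p Hp; apply HP2, HfN2, Hp).
  apply HB2 in HB2y. unfold U0 in HB2y.
  set (h := sN N2 (esub ps M c2 y)) in *.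
  assert (Hh : meas ps h) by (apply meas_sN; auto).
  set (Gs := fun (n : nat) w => h w + / (INR n + 1) < r2 w).
  assert (HGs : forall n, F (Gs n)) by (intro n; apply F_lt_fun; auto).
  assert (HGi : forall n w, Gs n w -> Gs (S n) w).
  { intros n w; unfold Gs. rewrite S_INR. pose proof (pos_INR n).
    assert (/ (INR n + 1 + 1) <= / (INR n + 1)) by (apply Rinv_le_contravar; lra). lra. }
  set (a := P (fun w => g w < eps) - (1 - lam)).
  assert (Ha : 0 < a) by (unfold a; lra).
  assert (HU : P (fun w => exists n, Gs n w) > 1 - a / 2).
  { assert (1 <= P (fun w => exists n, Gs n w)); [|lra].
    apply P_ae_one. apply Fsig_cunion; auto.
    eapply ae_mono. exact HB2y. intros w Hw.
    destruct (arch_inv (r2 w - h w)) as [n Hn]. lra. exists n. unfold Gs. lra. }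
  destruct (P_cont ps Gs _ HGs HGi HU) as [n0 Hn0].
  set (eps' := / (INR n0 + 1)).
  assert (Heps' : 0 < eps') by (unfold eps'; apply Rinv_0_lt_compat; pose proof (pos_INR n0); lra).
  set (lam' := Rmin (a / 2) (1 / 2)).
  assert (Hlam' : 0 < lam' < 1 /\ lam' <= a / 2).
  { unfold lam'. split. split. apply Rmin_glb_lt; lra. pose proof (Rmin_r (a/2) (1/2)); lra. apply Rmin_l. }
  exists (Uel ps M y N2 eps' lam'). split; [|split].
  - exists y, N2, eps', lam'. repeat split; auto; lra.
  - unfold Uel. rewrite (esub_self ps M y).
    assert (1 <= P (fun w => sN N2 (ezero M) w < eps')); [|lra].
    apply P_ae_one. apply meas_sN; auto.
    eapply ae_mono. apply (sN_zero ps M N2 HN2). intros w Hw; cbv beta in Hw; rewrite Hw; auto.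
  - intros z Hz. apply HB. unfold Uel in Hz |- *.
    set (w0 := esub ps M y z) in *.
    set (A0 := fun w => sN N2 w0 w < eps') in *.
    assert (HA0 : F A0) by (apply meas_sN; auto).
    set (A := fun w => A0 w /\ Gs n0 w).
    assert (HA : F A) by (apply F_inter; auto).
    set (z' := eadd y (eopp (esmul (Defs.ind ps A) w0))).
    assert (Hz'2 : B2 z').
    { apply HB2. unfold U0. rewrite (esub_split ps M c2 y z'). unfold z'. rewrite esub_back.
      eapply ae_mono. apply ae_and. apply ae_and.
      apply (sN_tri ps M N2 (esub ps M c2 y) (esmul (Defs.ind ps A) w0) HN2).
      apply (sN_ind ps M N2 A w0 HN2 HA). exact HB2y.
      intros w [[T [I1 I2]] Hw]. fold h in T. destruct (classic (A w)) as [HAw|HAw].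
      - rewrite (I1 HAw) in T. destruct HAw as [HA0w HGw]. unfold A0, Gs in HA0w, HGw. fold eps' in HGw. lra.
      - rewrite (I2 HAw) in T. lra. }
    destruct (HB2s z' Hz'2) as [B0 [_ [HB0 HB0s]]].
    pose proof (HB0s z' HB0) as HU0. unfold U0 in HU0. unfold z' in HU0. rewrite esub_back in HU0.
    assert (Hsub : P (fun w => g w < eps /\ A w) <= P (fun w => sN N1 (esub ps M x z) w < eps)).
    { apply P_ae_le. apply F_inter; auto. apply meas_sN; auto.
      rewrite (esub_split ps M x y z).
      eapply ae_mono. apply ae_and. apply ae_and.
      apply (sN_tri ps M N1 (esub ps M x y) w0 HN1).
      apply (sN_ind ps M N1 A w0 HN1 HA). exact HU0.
      intros w [[T [I1 I2]] Hw] [Hgw HAw]. fold g in T. rewrite (I1 HAw) in Hw.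
      unfold r in Hw. destruct Rlt_dec; [|contradiction]. fold w0. lra. }
    pose proof (P_inter_ge ps _ _ (Hg eps) HA).
    pose proof (P_inter_ge ps _ _ HA0 (HGs n0)).
    change (P (fun w => A0 w /\ Gs n0 w)) with (P A) in H0. unfold a in *. destruct Hlam'. lra.
Qed.

Lemma gen_sub (b1 b2 : (M -> Prop) -> Prop) (O : M -> Prop) :
  (forall B y, b1 B -> B y -> exists B', b2 B' /\ B' y /\ forall z, B' z -> B z) ->
  gen_open ps M b1 O -> gen_open ps M b2 O.
Proof. intros H H1 y Hy. destruct (H1 y Hy) as [B [HB [HBy HBs]]].
  destruct (H B y HB HBy) as [B' [HB' [HB'y HB's]]]. exists B'; auto. Qed.

End Main.

Theorem proposition4 (ps : ProbSpace) (M : L0Module ps)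
  (P1 P2 : (M -> Omega ps -> R) -> Prop) :
  stable M ->
  seminorm_family M P1 -> seminorm_family M P2 ->
  (exists p, P1 p) -> (exists p, P2 p) ->
  (forall O : M -> Prop, T0_open M P1 O <-> T0_open M P2 O) ->
  (forall O : M -> Prop, Tel_open M P1 O <-> Tel_open M P2 O).
Proof.
  intros _ HP1 HP2 _ _ HT O. split; apply gen_sub.
  - apply half; auto. intros O' H; apply HT; auto.
  - apply half; auto. intros O' H; apply HT; auto.
Qed.
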